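(* Let $\bm M_1,\bm M_2$ be real matrices of the same dimension with $\|\bm M_1\|_S=\mu$, $\|\bm M_2\|_S=\nu$. Let $\theta=\Theta(\bm M_1,\bm M_2)$ be the smallest principal angle between their column spaces and $\eta=\Theta(\bm M_1',\bm M_2')$ the smallest principal angle between their row spaces. Then $\|\bm M_1+\bm M_2\|_S^2\le\Lambda^2(\mu,\nu,\theta,\eta)$, where $$\Lambda^2(\mu,\nu,\theta,\eta)=\frac12\Big[\sqrt{(\mu^2+\nu^2+2\mu\nu\cos\theta\cos\eta)^2-4\mu^2\nu^2\sin^2\theta\sin^2\eta}+\mu^2+\nu^2+2\mu\nu\cos\theta\cos\eta\Big].$$
   Context: $\|\cdot\|_S$ is the spectral norm. For matrices $\bm M_1,\bm M_2$ with the same number of rows (both nonzero), the smallest principal angle $\Theta(\bm M_1,\bm M_2)\in[0,\pi/2]$ between their column spaces is defined by $\cos\Theta(\bm M_1,\bm M_2)=\sup\frac{u_1'\bm M_1'\bm M_2u_2}{\|\bm M_1u_1\|\,\|\bm M_2u_2\|}$, the supremum over $u_1,u_2$ with $\bm M_1u_1\ne0$, $\bm M_2u_2\ne0$. *)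

(* Defs.v *)
From Stdlib Require Import Reals Lra.
Open Scope R_scope.

(* A real m x n matrix is represented by its entry function; only entries
   (i, j) with i < m, j < n are ever used. Vectors likewise: nat -> R. *)
Definition mat := nat -> nat -> R.
Definition vec := nat -> R.

Fixpoint rsum (n : nat) (f : nat -> R) : R :=
  match n with
  | O => 0
  | S k => rsum k f + f k
  end.

Definition mulv (n : nat) (M : mat) (x : vec) : vec :=
  fun i => rsum n (fun j => M i j * x j).

Definition dot (m : nat) (u v : vec) : R := rsum m (fun i => u i * v i).
Definition vnorm (m : nat) (u : vec) : R := sqrt (dot m u u).

Definition trmat (M : mat) : mat := fun i j => M j i.
Definition addmat (M1 M2 : mat) : mat := fun i j => M1 i j + M2 i j.

Definition spec_ratios (m n : nat) (M : mat) : R -> Prop :=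
  fun r => exists x : vec, vnorm n x <> 0 /\
     r = vnorm m (mulv n M x) / vnorm n x.
Definition is_spectral_norm (m n : nat) (M : mat) (s : R) : Prop :=
  is_lub (spec_ratios m n M) s.

(* Smallest principal angle between the column spaces of M1 (m x n1) and
   M2 (m x n2):  theta in [0, pi/2] with
   cos theta = sup u1' M1' M2 u2 / (|M1 u1| |M2 u2|),  M1 u1 <> 0, M2 u2 <> 0.
   (u1' M1' M2 u2 is the inner product of M1 u1 and M2 u2.) *)
Definition angle_ratios (m n1 n2 : nat) (M1 M2 : mat) : R -> Prop :=
  fun r => exists u1 u2 : vec,
     vnorm m (mulv n1 M1 u1) <> 0 /\ vnorm m (mulv n2 M2 u2) <> 0 /\
     r = dot m (mulv n1 M1 u1) (mulv n2 M2 u2)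
         / (vnorm m (mulv n1 M1 u1) * vnorm m (mulv n2 M2 u2)).
Definition is_principal_angle (m n1 n2 : nat) (M1 M2 : mat) (theta : R) : Prop :=
  0 <= theta <= PI / 2 /\ is_lub (angle_ratios m n1 n2 M1 M2) (cos theta).

Definition Lambda2 (mu nu theta eta : R) : R :=
  / 2 * ( sqrt ( (mu ^ 2 + nu ^ 2 + 2 * mu * nu * cos theta * cos eta) ^ 2
                 - 4 * mu ^ 2 * nu ^ 2 * (sin theta) ^ 2 * (sin eta) ^ 2 )
          + (mu ^ 2 + nu ^ 2 + 2 * mu * nu * cos theta * cos eta) ).

(* Main.v *)
Require Import Defs.
From Stdlib Require Import Reals Lra Psatz FunctionalExtensionality.
Open Scope R_scope.

Lemma lam_facts (mu nu a b : R) : 0<=mu -> 0<=nu -> 0<=a<=1 -> 0<=b<=1 ->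
  let T := mu^2+nu^2+2*mu*nu*a*b in
  let D := mu^2*nu^2*(1-a^2)*(1-b^2) in
  let lam := /2*(sqrt(T^2 - 4*D) + T) in
  lam^2 - T*lam + D = 0 /\ 0 <= lam /\ mu^2 <= lam /\ nu^2 <= lam /\ T/2 <= lam.
Proof.
  intros Hmu Hnu Ha Hb T D lam.
  assert (ha2 : 0 <= 1-a^2) by nra.
  assert (hb2 : 0 <= 1-b^2) by nra.
  assert (hab2 : 0 <= (1-a^2)*(1-b^2)) by (apply Rmult_le_pos; lra).
  assert (HD : 0 <= T^2 - 4*D).
  { unfold T, D.
    assert (0 <= mu*nu) by nra.
    assert (2*mu*nu*(1+a*b) <= mu^2+nu^2+2*mu*nu*a*b) by (assert (0 <= (mu-nu)^2) by apply pow2_ge_0; nra).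
    assert ((1-a^2)*(1-b^2) <= (1+a*b)^2) by (assert (0<=(a+b)^2) by apply pow2_ge_0; nra).
    assert ((2*mu*nu*(1+a*b))^2 <= (mu^2+nu^2+2*mu*nu*a*b)^2).
    { apply pow_incr; split; nra. }
    nra. }
  set (S := sqrt (T^2-4*D)).
  assert (HS2 : S*S = T^2 - 4*D) by (apply sqrt_sqrt; lra).
  assert (HS0 : 0 <= S) by apply sqrt_pos.
  assert (HT0 : 0 <= T) by (unfold T; assert (0<=mu*nu*a*b) by (repeat apply Rmult_le_pos; lra); nra).
  assert (Hf : lam^2 - T*lam + D = 0) by (unfold lam; fold S; nra).
  assert (HD0 : 0 <= D) by (unfold D; assert (0<=1-a^2) by nra; assert (0<=1-b^2) by nra;
     repeat apply Rmult_le_pos; nra).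
  assert (HST : S <= T) by nra.
  assert (Hl0 : 0 <= lam) by (unfold lam; fold S; lra).
  assert (Hlam' : lam = (S+T)/2) by (unfold lam; fold S; lra).
  assert (Fm : (mu^2)^2 - T*mu^2 + D <= 0).
  { unfold T, D. assert (0<=mu*nu*a*b) by (repeat apply Rmult_le_pos; lra).
    assert (0 <= a^2+b^2-a^2*b^2) by nra. nra. }
  assert (Fn : (nu^2)^2 - T*nu^2 + D <= 0).
  { unfold T, D. assert (0<=mu*nu*a*b) by (repeat apply Rmult_le_pos; lra).
    assert (0 <= a^2+b^2-a^2*b^2) by nra. nra. }
  assert (Hfac : forall z, z^2 - T*z + D = (z - (S+T)/2) * (z - (T-S)/2)) by (intro z; nra).
  split; [exact Hf|]. split; [exact Hl0|].
  split; [|split].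
  - destruct (Rle_dec (mu^2) lam) as [h|h]; [exact h|exfalso].
    rewrite Hfac in Fm. nra.
  - destruct (Rle_dec (nu^2) lam) as [h|h]; [exact h|exfalso].
    rewrite Hfac in Fn. nra.
  - lra.
Qed.

Lemma psd_form (A11 A12 A22 u v : R) : 0 <= A11 -> 0 <= A22 -> A12^2 <= A11*A22 ->
  0 <= A11*u^2 + 2*A12*u*v + A22*v^2.
Proof.
  intros h1 h2 h3.
  destruct (Req_dec A11 0) as [e|e].
  - subst. assert (A12 = 0) by nra. subst. nra.
  - assert (0 < A11) by lra.
    assert (0 <= A11*(A11*u^2 + 2*A12*u*v + A22*v^2)).
    { replace (A11*(A11*u^2 + 2*A12*u*v + A22*v^2)) with ((A11*u+A12*v)^2 + (A11*A22-A12^2)*v^2) by ring.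
      assert (0 <= (A11*u+A12*v)^2) by apply pow2_ge_0.
      assert (0 <= (A11*A22-A12^2)*v^2) by (apply Rmult_le_pos; [lra|apply pow2_ge_0]). lra. }
    nra.
Qed.

Lemma core (mu nu a b u v gm : R) : 0<=mu -> 0<=nu -> 0<=a<=1 -> 0<=b<=1 ->
  0<=u<=1 -> 0<=v<=1 -> -b<=gm<=b ->
  (forall P Q, (P*u+Q*v)^2 <= P^2+Q^2+2*P*Q*gm) ->
  mu^2*u^2+nu^2*v^2+2*a*mu*nu*u*v <=
  /2*(sqrt((mu^2+nu^2+2*mu*nu*a*b)^2 - 4*(mu^2*nu^2*(1-a^2)*(1-b^2))) + (mu^2+nu^2+2*mu*nu*a*b)).
Proof.
  intros Hmu Hnu Ha Hb Hu Hv Hg H.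
  destruct (lam_facts mu nu a b Hmu Hnu Ha Hb) as [Hf [Hl0 [Hlm [Hln HlT]]]].
  set (T := mu^2+nu^2+2*mu*nu*a*b) in *.
  set (D := mu^2*nu^2*(1-a^2)*(1-b^2)) in *.
  set (lam := /2*(sqrt(T^2 - 4*D) + T)) in *.
  set (Qg := u^2+v^2-2*gm*u*v).
  specialize (H (u-gm*v) (v-gm*u)).
  replace ((u-gm*v)*u+(v-gm*u)*v) with Qg in H by (unfold Qg; ring).
  replace ((u-gm*v)^2+(v-gm*u)^2+2*(u-gm*v)*(v-gm*u)*gm) with ((1-gm^2)*Qg) in H by (unfold Qg; ring).
  assert (Hg2 : gm^2 <= b^2) by nra.
  assert (Hb1 : b^2 <= 1) by nra.
  assert (HQ0 : 0 <= Qg).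
  { replace Qg with ((u-gm*v)^2 + (1-gm^2)*v^2) by (unfold Qg; ring).
    assert (0 <= (u-gm*v)^2) by apply pow2_ge_0.
    assert (0 <= (1-gm^2)*v^2) by (apply Rmult_le_pos; [lra|apply pow2_ge_0]). lra. }
  destruct (Rlt_dec (gm^2) 1) as [Hlt|Hge].
  - assert (HQ : Qg <= 1-gm^2).
    { destruct (Req_dec Qg 0) as [e|e]; [lra|]. nra. }
    assert (Hfg : 0 <= lam^2 - (mu^2+nu^2+2*mu*nu*a*gm)*lam + mu^2*nu^2*(1-a^2)*(1-gm^2)).
    { assert (0 <= 2*a*mu*nu*(b-gm)*lam).
      { assert (0 <= 2*a*mu*nu) by (assert (0<=a*mu) by (apply Rmult_le_pos; lra); assert (0<=a*mu*nu) by (apply Rmult_le_pos; lra); lra). apply Rmult_le_pos; [apply Rmult_le_pos|]; lra. }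
      assert (0 <= mu^2*nu^2*(1-a^2)*(b^2-gm^2)).
      { repeat apply Rmult_le_pos; try nra. }
      unfold T, D in Hf. nra. }
    assert (Hform := psd_form (lam - (1-gm^2)*mu^2) (-(gm*lam + (1-gm^2)*a*mu*nu))
                     (lam - (1-gm^2)*nu^2) u v).
    assert (0 <= lam * Qg - (1-gm^2)*(mu^2*u^2+nu^2*v^2+2*a*mu*nu*u*v)).
    { replace (lam * Qg - (1-gm^2)*(mu^2*u^2+nu^2*v^2+2*a*mu*nu*u*v)) with
        ((lam - (1-gm^2)*mu^2)*u^2 + 2*(-(gm*lam + (1-gm^2)*a*mu*nu))*u*v + (lam - (1-gm^2)*nu^2)*v^2)
        by (unfold Qg; ring).
      apply Hform.
      - assert (0 <= gm^2*mu^2) by nra. nra.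
      - assert (0 <= gm^2*nu^2) by nra. nra.
      - assert (0 <= (lam - (1-gm^2)*mu^2)*(lam - (1-gm^2)*nu^2) - (-(gm*lam + (1-gm^2)*a*mu*nu))^2); [|lra].
        replace ((lam - (1-gm^2)*mu^2)*(lam - (1-gm^2)*nu^2) - (-(gm*lam + (1-gm^2)*a*mu*nu))^2)
          with ((1-gm^2)*(lam^2 - (mu^2+nu^2+2*mu*nu*a*gm)*lam + mu^2*nu^2*(1-a^2)*(1-gm^2))) by ring.
        apply Rmult_le_pos; lra. }
    assert (lam*Qg <= lam*(1-gm^2)) by (apply Rmult_le_compat_l; lra).
    assert (0 < 1-gm^2) by lra.
    nra.
  - assert (Hg1 : gm^2 = 1) by lra. assert (Hb1' : b = 1) by nra.
    assert (HQz : Qg = 0) by nra.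
    assert (HDz : D = 0) by (unfold D; rewrite Hb1'; ring).
    assert (HlT' : lam = T).
    { unfold lam. rewrite HDz. replace (T^2 - 4*0) with (T*T) by ring.
      rewrite sqrt_square; [lra|]. unfold T. rewrite Hb1'.
      assert (0 <= mu*nu*a) by (repeat apply Rmult_le_pos; lra). nra. }
    rewrite HlT'. unfold T. rewrite Hb1'.
    assert (Hgm : gm = 1 \/ gm = -1) by nra.
    unfold Qg in HQz; destruct Hgm as [e|e]; rewrite e in HQz.
    + assert (e2 : u = v) by nra. rewrite <- e2.
      assert (u^2 <= 1) by nra.
      assert (0 <= a*mu*nu) by (repeat apply Rmult_le_pos; lra).
      assert (mu^2*u^2 <= mu^2) by nra.
      assert (nu^2*u^2 <= nu^2) by nra.
      assert (a*mu*nu*u*u <= a*mu*nu) by nra. nra.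
    + assert (e2 : u = 0 /\ v = 0) by nra. destruct e2 as [e3 e4]; rewrite e3, e4.
      assert (0 <= mu*nu*a) by (repeat apply Rmult_le_pos; lra). nra.
Qed.

Lemma rsum_ext n f g : (forall i, (i<n)%nat -> f i = g i) -> rsum n f = rsum n g.
Proof.
  induction n; intros H; simpl; auto.
  rewrite IHn by (intros; apply H; lia). rewrite H by lia. reflexivity.
Qed.

Lemma rsum_plus n f g : rsum n (fun i => f i + g i) = rsum n f + rsum n g.
Proof. induction n; simpl; [ring|rewrite IHn; ring]. Qed.

Lemma rsum_scal n k f : rsum n (fun i => k * f i) = k * rsum n f.
Proof. induction n; simpl; [ring|rewrite IHn; ring]. Qed.

Lemma rsum_nonneg n f : (forall i, 0 <= f i) -> 0 <= rsum n f.
Proof. intros H; induction n; simpl; [lra|specialize (H n); lra]. Qed.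

Lemma rsum_swap n m f : rsum n (fun i => rsum m (fun j => f i j)) = rsum m (fun j => rsum n (fun i => f i j)).
Proof.
  induction n; simpl.
  - clear. induction m; simpl; [reflexivity|rewrite <- IHm; ring].
  - rewrite IHn. rewrite <- rsum_plus. reflexivity.
Qed.

Lemma dot_comm m u v : dot m u v = dot m v u.
Proof. unfold dot. apply rsum_ext; intros; ring. Qed.

Lemma dot_nonneg m u : 0 <= dot m u u.
Proof. unfold dot. apply rsum_nonneg; intros; nra. Qed.

Lemma dot_lin_l m P Q u v w :
  dot m (fun i => P*u i + Q*v i) w = P*dot m u w + Q*dot m v w.
Proof.
  unfold dot. rewrite <- !rsum_scal, <- rsum_plus. apply rsum_ext; intros; ring.
Qed.

Lemma adjoint m n M y z : dot n (mulv m (trmat M) y) z = dot m y (mulv n M z).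
Proof.
  unfold dot, mulv, trmat.
  transitivity (rsum n (fun j => rsum m (fun i => M i j * y i * z j))).
  { apply rsum_ext; intros. rewrite Rmult_comm, <- rsum_scal. apply rsum_ext; intros; ring. }
  rewrite rsum_swap. apply rsum_ext; intros. rewrite <- rsum_scal. apply rsum_ext; intros; ring.
Qed.

Lemma cs m u v : (dot m u v)^2 <= dot m u u * dot m v v.
Proof.
  set (A := dot m u u). set (B := dot m u v). set (C := dot m v v).
  assert (H : forall t, 0 <= A + 2*t*B + t^2*C).
  { intro t. assert (E := dot_nonneg m (fun i => 1*u i + t*v i)).
    rewrite dot_lin_l in E. rewrite (dot_comm m u), (dot_comm m v) in E.
    rewrite !dot_lin_l in E. fold A B C in E. rewrite (dot_comm m v u) in E. fold B in E. nra. }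
  assert (HC : 0 <= C) by apply dot_nonneg.
  destruct (Req_dec C 0) as [e|e].
  - rewrite e in H. destruct (Req_dec B 0) as [e2|e2].
    + rewrite e2, e. lra.
    + specialize (H (-(A+1)/(2*B))). exfalso.
      replace (A + 2 * (-(A+1)/(2*B)) * B + (-(A+1)/(2*B))^2 * 0) with (-1) in H by (field; auto). lra.
  - specialize (H (-B/C)).
    replace (A + 2 * (- B / C) * B + (- B / C) ^ 2 * C) with (A - B^2/C) in H by (field; auto).
    assert (0 < C) by lra.
    assert (B^2/C <= A) by lra.
    apply Rmult_le_compat_r with (r := C) in H1; [|lra].
    replace (B^2/C*C) with (B^2) in H1 by (field; lra). lra.
Qed.

Lemma vnorm_sq m u : vnorm m u ^ 2 = dot m u u.
Proof. unfold vnorm. rewrite pow2_sqrt; [auto|apply dot_nonneg]. Qed.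

Lemma vnorm_pos m u : 0 <= vnorm m u.
Proof. apply sqrt_pos. Qed.

Lemma vnorm_scal m k u : vnorm m (fun i => k * u i) = Rabs k * vnorm m u.
Proof.
  unfold vnorm. replace (dot m (fun i => k*u i) (fun i => k*u i)) with (k^2 * dot m u u).
  - rewrite sqrt_mult; [|apply pow2_ge_0|apply dot_nonneg].
    rewrite <- sqrt_Rsqr_abs. unfold Rsqr. f_equal. f_equal. ring.
  - unfold dot. rewrite <- rsum_scal. apply rsum_ext; intros; ring.
Qed.

Lemma mulv_scal n M k x : mulv n M (fun j => k * x j) = (fun i => k * mulv n M x i).
Proof.
  apply functional_extensionality; intro i. unfold mulv. rewrite <- rsum_scal.
  apply rsum_ext; intros; ring.
Qed.

Lemma mulv_add n M1 M2 x : mulv n (addmat M1 M2) x = (fun i => 1 * mulv n M1 x i + 1 * mulv n M2 x i).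
Proof.
  apply functional_extensionality; intro i. unfold mulv, addmat. rewrite <- !rsum_scal, <- rsum_plus.
  apply rsum_ext; intros; ring.
Qed.

Lemma spec_nonneg m n M mu : is_spectral_norm m n M mu -> 0 <= mu.
Proof.
  intros [Hub Hlub].
  destruct (Rle_dec 0 mu) as [h|h]; [exact h|exfalso].
  assert (mu <= mu - 1); [|lra].
  apply Hlub. intros r [x [Hx Hr]]. exfalso.
  assert (0 <= r). { rewrite Hr. unfold Rdiv. apply Rmult_le_pos; [apply vnorm_pos|apply Rlt_le, Rinv_0_lt_compat].
    pose proof (vnorm_pos n x). lra. }
  assert (r <= mu) by (apply Hub; exists x; auto). lra.
Qed.

Lemma spec_bound m n M mu : is_spectral_norm m n M mu ->
  forall z, vnorm m (mulv n M z) <= mu * vnorm n z.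
Proof.
  intros HS z. pose proof (spec_nonneg _ _ _ _ HS) as Hmu.
  destruct HS as [Hub _].
  destruct (Req_dec (vnorm n z) 0) as [e|e].
  - rewrite e, Rmult_0_r.
    assert (Hz : dot n z z = 0).
    { pose proof (vnorm_sq n z). rewrite e in H. lra. }
    pose proof (cs n (mulv m (trmat M) (mulv n M z)) z) as C.
    rewrite Hz, Rmult_0_r, adjoint in C.
    assert (dot m (mulv n M z) (mulv n M z) = 0) by nra.
    unfold vnorm. rewrite H. rewrite sqrt_0. lra.
  - assert (r : vnorm m (mulv n M z) / vnorm n z <= mu) by (apply Hub; exists z; auto).
    pose proof (vnorm_pos n z).
    apply Rmult_le_compat_r with (r := vnorm n z) in r; [|lra].
    replace (vnorm m (mulv n M z) / vnorm n z * vnorm n z) with (vnorm m (mulv n M z)) in r by (field; auto).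
    exact r.
Qed.

Lemma spec_bound_tr m n M mu : is_spectral_norm m n M mu ->
  forall y, vnorm n (mulv m (trmat M) y) <= mu * vnorm m y.
Proof.
  intros HS y. pose proof (spec_nonneg _ _ _ _ HS) as Hmu.
  set (w := mulv m (trmat M) y).
  pose proof (spec_bound _ _ _ _ HS w) as Hb.
  pose proof (cs m y (mulv n M w)) as C.
  rewrite <- adjoint in C. fold w in C.
  rewrite <- !vnorm_sq in C.
  pose proof (vnorm_pos n w). pose proof (vnorm_pos m y). pose proof (vnorm_pos m (mulv n M w)).
  set (W := vnorm n w) in *. set (Y := vnorm m y) in *. set (Z := vnorm m (mulv n M w)) in *.
  destruct (Req_dec W 0) as [e|e]; [rewrite e; nra|].
  assert (Z^2 <= (mu*W)^2) by (apply pow_incr; lra).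
  assert (W^4 <= Y^2 * (mu*W)^2) by nra.
  assert (W^2 <= (mu*Y)^2) by nra.
  destruct (Rle_dec W (mu*Y)); [auto|].
  assert (mu*Y < W) by lra. assert (0 <= mu*Y) by nra. nra.
Qed.

Lemma angle_bound m n1 n2 M1 M2 th : is_principal_angle m n1 n2 M1 M2 th ->
  forall u1 u2, vnorm m (mulv n1 M1 u1) <> 0 -> vnorm m (mulv n2 M2 u2) <> 0 ->
  dot m (mulv n1 M1 u1) (mulv n2 M2 u2) <= cos th * (vnorm m (mulv n1 M1 u1) * vnorm m (mulv n2 M2 u2)).
Proof.
  intros [_ [Hub _]] u1 u2 h1 h2.
  assert (r : dot m (mulv n1 M1 u1) (mulv n2 M2 u2) / (vnorm m (mulv n1 M1 u1) * vnorm m (mulv n2 M2 u2)) <= cos th).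
  { apply Hub. exists u1, u2. auto. }
  pose proof (vnorm_pos m (mulv n1 M1 u1)). pose proof (vnorm_pos m (mulv n2 M2 u2)).
  assert (0 < vnorm m (mulv n1 M1 u1) * vnorm m (mulv n2 M2 u2)) by (apply Rmult_lt_0_compat; lra).
  apply Rmult_le_compat_r with (r := vnorm m (mulv n1 M1 u1) * vnorm m (mulv n2 M2 u2)) in r; [|lra].
  replace (dot m (mulv n1 M1 u1) (mulv n2 M2 u2) / (vnorm m (mulv n1 M1 u1) * vnorm m (mulv n2 M2 u2)) *
     (vnorm m (mulv n1 M1 u1) * vnorm m (mulv n2 M2 u2))) with (dot m (mulv n1 M1 u1) (mulv n2 M2 u2)) in r
     by (field; lra).
  exact r.
Qed.

Lemma cos_facts th : 0 <= th <= PI/2 -> 0 <= cos th <= 1.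
Proof.
  intros h. split; [apply cos_ge_0; pose proof PI_RGT_0; lra|]. apply COS_bound.
Qed.

Lemma unit_case (m n : nat) (M1 M2 : mat) (mu nu theta eta : R) (x : vec) :
  is_spectral_norm m n M1 mu ->
  is_spectral_norm m n M2 nu ->
  is_principal_angle m n n M1 M2 theta ->
  is_principal_angle n m m (trmat M1) (trmat M2) eta ->
  dot n x x = 1 ->
  let a := cos theta in let b := cos eta in
  dot m (mulv n (addmat M1 M2) x) (mulv n (addmat M1 M2) x) <=
  /2*(sqrt((mu^2+nu^2+2*mu*nu*a*b)^2 - 4*(mu^2*nu^2*(1-a^2)*(1-b^2))) + (mu^2+nu^2+2*mu*nu*a*b)).
Proof.
  intros HS1 HS2 HA HB Hx a b.
  pose proof (spec_nonneg _ _ _ _ HS1) as Hmu.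
  pose proof (spec_nonneg _ _ _ _ HS2) as Hnu.
  assert (Ha : 0 <= a <= 1) by (apply cos_facts, HA).
  assert (Hb : 0 <= b <= 1) by (apply cos_facts, HB).
  destruct (lam_facts mu nu a b Hmu Hnu Ha Hb) as [_ [Hl0 [Hlm [Hln _]]]].
  set (lam := /2*(sqrt((mu^2+nu^2+2*mu*nu*a*b)^2 - 4*(mu^2*nu^2*(1-a^2)*(1-b^2))) + (mu^2+nu^2+2*mu*nu*a*b))) in *.
  set (p1 := mulv n M1 x). set (p2 := mulv n M2 x).
  assert (Hq : dot m (mulv n (addmat M1 M2) x) (mulv n (addmat M1 M2) x) =
               dot m p1 p1 + dot m p2 p2 + 2 * dot m p1 p2).
  { rewrite mulv_add. fold p1 p2. rewrite (dot_lin_l m 1 1 p1 p2).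
    rewrite (dot_comm m p1 (fun i => 1 * p1 i + 1 * p2 i)), (dot_comm m p2 (fun i => 1 * p1 i + 1 * p2 i)).
    rewrite !(dot_lin_l m 1 1 p1 p2).
    rewrite (dot_comm m p2 p1). ring. }
  rewrite Hq.
  set (c1 := vnorm m p1). set (c2 := vnorm m p2).
  assert (Ec1 : dot m p1 p1 = c1^2) by (unfold c1; rewrite vnorm_sq; auto).
  assert (Ec2 : dot m p2 p2 = c2^2) by (unfold c2; rewrite vnorm_sq; auto).
  assert (Hxn : vnorm n x = 1) by (unfold vnorm; rewrite Hx; apply sqrt_1).
  assert (Bc1 : c1 <= mu) by (unfold c1, p1; pose proof (spec_bound _ _ _ _ HS1 x); rewrite Hxn in H; lra).
  assert (Bc2 : c2 <= nu) by (unfold c2, p2; pose proof (spec_bound _ _ _ _ HS2 x); rewrite Hxn in H; lra).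
  pose proof (vnorm_pos m p1) as Pc1. pose proof (vnorm_pos m p2) as Pc2. fold c1 c2 in Pc1, Pc2.
  pose proof (cs m p1 p2) as CS12. rewrite Ec1, Ec2 in CS12.
  destruct (Req_dec c1 0) as [z1|z1].
  { rewrite z1 in CS12. assert (dot m p1 p2 = 0) by timeout 15 nra. rewrite H, Ec1, Ec2, z1.
    assert (c2^2 <= nu^2) by (apply pow_incr; lra). lra. }
  destruct (Req_dec c2 0) as [z2|z2].
  { rewrite z2 in CS12. assert (dot m p1 p2 = 0) by timeout 15 nra. rewrite H, Ec1, Ec2, z2.
    assert (c1^2 <= mu^2) by (apply pow_incr; lra). lra. }
  assert (Hh : dot m p1 p2 <= a * (c1 * c2)) by (apply (angle_bound _ _ _ _ _ _ HA); auto).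
  set (r1 := mulv m (trmat M1) p1). set (r2 := mulv m (trmat M2) p2).
  set (e1 := vnorm n r1). set (e2 := vnorm n r2).
  assert (Be1 : e1 <= mu * c1) by (apply spec_bound_tr; auto).
  assert (Be2 : e2 <= nu * c2) by (apply spec_bound_tr; auto).
  assert (Dr1 : dot n r1 x = c1^2) by (unfold r1; rewrite adjoint; fold p1; auto).
  assert (Dr2 : dot n r2 x = c2^2) by (unfold r2; rewrite adjoint; fold p2; auto).
  assert (Ee1 : dot n r1 r1 = e1^2) by (unfold e1; rewrite vnorm_sq; auto).
  assert (Ee2 : dot n r2 r2 = e2^2) by (unfold e2; rewrite vnorm_sq; auto).
  pose proof (vnorm_pos n r1) as Pe1. pose proof (vnorm_pos n r2) as Pe2. fold e1 e2 in Pe1, Pe2.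
  assert (Ce1 : c1^2 <= e1).
  { pose proof (cs n r1 x) as C. rewrite Dr1, Ee1, Hx in C.
    assert (0 <= c1^2) by apply pow2_ge_0. timeout 15 nra. }
  assert (Ce2 : c2^2 <= e2).
  { pose proof (cs n r2 x) as C. rewrite Dr2, Ee2, Hx in C.
    assert (0 <= c2^2) by apply pow2_ge_0. timeout 15 nra. }
  assert (c1^2 > 0) by (apply pow_lt; lra).
  assert (c2^2 > 0) by (apply pow_lt; lra).
  assert (He1 : e1 > 0) by lra. assert (He2 : e2 > 0) by lra.
  set (g := dot n r1 r2).
  assert (Hg1 : g <= b * (e1 * e2)) by (apply (angle_bound _ _ _ _ _ _ HB); fold r1 r2 e1 e2; lra).
  assert (Hg2 : - g <= b * (e1 * e2)).
  { pose proof (angle_bound _ _ _ _ _ _ HB (fun i => -1 * p1 i) p2) as K.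
    rewrite mulv_scal, vnorm_scal in K. fold r1 r2 e1 e2 in K.
    replace (dot n (fun i => -1 * r1 i) r2) with (-g) in K.
    - replace (Rabs (-1)) with 1 in K by (rewrite Rabs_left; lra). rewrite Rmult_1_l in K. apply K; lra.
    - replace (fun i => -1 * r1 i) with (fun i => -1 * r1 i + 0 * r1 i)
        by (apply functional_extensionality; intro; ring).
      rewrite (dot_lin_l n (-1) 0 r1 r1 r2). unfold g. ring. }
  assert (H4 : forall P Q, (P*c1^2 + Q*c2^2)^2 <= P^2*e1^2 + Q^2*e2^2 + 2*P*Q*g).
  { intros P Q. pose proof (cs n (fun j => P*r1 j + Q*r2 j) x) as C.
    rewrite Hx, Rmult_1_r, !(dot_lin_l n P Q r1 r2), Dr1, Dr2 in C.
    rewrite (dot_comm n r1 (fun j => P*r1 j + Q*r2 j)), (dot_comm n r2 (fun j => P*r1 j + Q*r2 j)) in C.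
    rewrite !(dot_lin_l n P Q r1 r2), Ee1, Ee2, (dot_comm n r2 r1) in C.
    fold g in C. timeout 15 nra. }
  set (u := c1^2/e1). set (v := c2^2/e2). set (gm := g/(e1*e2)).
  assert (Hcore : mu^2*u^2+nu^2*v^2+2*a*mu*nu*u*v <= lam).
  { apply (core mu nu a b u v gm); auto.
    - unfold u; split; [apply Rlt_le, Rdiv_lt_0_compat; lra|].
      apply Rmult_le_reg_r with e1; [lra|]. unfold Rdiv. rewrite Rmult_assoc, Rinv_l; lra.
    - unfold v; split; [apply Rlt_le, Rdiv_lt_0_compat; lra|].
      apply Rmult_le_reg_r with e2; [lra|]. unfold Rdiv. rewrite Rmult_assoc, Rinv_l; lra.
    - assert (0 < e1*e2) by (apply Rmult_lt_0_compat; lra).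
      unfold gm; split.
      + apply Rmult_le_reg_r with (e1*e2); [lra|]. unfold Rdiv. rewrite Rmult_assoc, Rinv_l; lra.
      + apply Rmult_le_reg_r with (e1*e2); [lra|]. unfold Rdiv. rewrite Rmult_assoc, Rinv_l; lra.
    - intros P Q. specialize (H4 (P/e1) (Q/e2)).
      replace (P/e1*c1^2 + Q/e2*c2^2) with (P*u+Q*v) in H4 by (unfold u, v; field; lra).
      replace ((P/e1)^2*e1^2 + (Q/e2)^2*e2^2 + 2*(P/e1)*(Q/e2)*g) with (P^2+Q^2+2*P*Q*gm) in H4
        by (unfold gm; field; lra).
      exact H4. }
  assert (Hu : c1 <= mu*u).
  { unfold u. apply Rmult_le_reg_r with e1; [lra|]. unfold Rdiv.
    replace (mu * (c1^2 * /e1) * e1) with (mu*c1^2) by (field; lra). timeout 15 nra. }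
  assert (Hv : c2 <= nu*v).
  { unfold v. apply Rmult_le_reg_r with e2; [lra|]. unfold Rdiv.
    replace (nu * (c2^2 * /e2) * e2) with (nu*c2^2) by (field; lra). timeout 15 nra. }
  rewrite Ec1, Ec2.
  assert (c1^2 <= (mu*u)^2) by (apply pow_incr; lra).
  assert (c2^2 <= (nu*v)^2) by (apply pow_incr; lra).
  assert (c1*c2 <= (mu*u)*(nu*v)) by (apply Rmult_le_compat; lra).
  assert (a*(c1*c2) <= a*((mu*u)*(nu*v))) by (apply Rmult_le_compat_l; lra).
  timeout 15 nra.
Qed.

Theorem lemma2 (m n : nat) (M1 M2 : mat) (mu nu theta eta s : R) :
  is_spectral_norm m n M1 mu ->
  is_spectral_norm m n M2 nu ->
  is_principal_angle m n n M1 M2 theta ->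
  is_principal_angle n m m (trmat M1) (trmat M2) eta ->
  is_spectral_norm m n (addmat M1 M2) s ->
  s ^ 2 <= Lambda2 mu nu theta eta.
Proof.
  intros HS1 HS2 HA HB HS.
  pose proof (unit_case m n M1 M2 mu nu theta eta) as U.
  cbv zeta in U.
  set (a := cos theta) in *. set (b := cos eta) in *.
  set (lam := /2*(sqrt((mu^2+nu^2+2*mu*nu*a*b)^2 - 4*(mu^2*nu^2*(1-a^2)*(1-b^2))) + (mu^2+nu^2+2*mu*nu*a*b))) in *.
  assert (EL : Lambda2 mu nu theta eta = lam).
  { unfold Lambda2, lam. replace (sin theta ^ 2) with (1 - a^2) by (unfold a; pose proof (sin2_cos2 theta); unfold Rsqr in *; nra). replace (sin eta ^ 2) with (1 - b^2) by (unfold b; pose proof (sin2_cos2 eta); unfold Rsqr in *; nra). fold a b. replace (4 * mu ^ 2 * nu ^ 2 * (1 - a ^ 2) * (1 - b ^ 2)) with (4*(mu^2*nu^2*(1-a^2)*(1-b^2))) by ring. reflexivity. }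
  rewrite EL.
  pose proof (spec_nonneg _ _ _ _ HS1) as Hmu.
  pose proof (spec_nonneg _ _ _ _ HS2) as Hnu.
  assert (Ha : 0 <= a <= 1) by (apply cos_facts, HA).
  assert (Hb : 0 <= b <= 1) by (apply cos_facts, HB).
  destruct (lam_facts mu nu a b Hmu Hnu Ha Hb) as [_ [Hl0 _]]. fold lam in Hl0.
  pose proof (spec_nonneg _ _ _ _ HS) as Hs.
  assert (Hsl : s <= sqrt lam).
  { destruct HS as [_ Hlub]. apply Hlub. intros r [x [Hx Hr]].
    set (k := / vnorm n x).
    pose proof (vnorm_pos n x).
    assert (Hk : 0 < k) by (apply Rinv_0_lt_compat; lra).
    set (x' := fun j => k * x j).
    assert (Hx' : dot n x' x' = 1).
    { assert (E : vnorm n x' = 1) by (unfold x'; rewrite vnorm_scal, Rabs_pos_eq by lra; unfold k; field; auto).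
      rewrite <- vnorm_sq, E. ring. }
    specialize (U x' HS1 HS2 HA HB Hx').
    assert (E2 : vnorm m (mulv n (addmat M1 M2) x') = r).
    { unfold x'. rewrite mulv_scal, vnorm_scal, Rabs_pos_eq by lra. rewrite Hr. unfold k, Rdiv. ring. }
    rewrite <- E2. unfold vnorm. apply sqrt_le_1_alt. exact U. }
  assert (s^2 <= (sqrt lam)^2) by (apply pow_incr; lra).
  rewrite pow2_sqrt in H by lra. exact H.
Qed.
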